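(* For $d\ge 4$ and $\ell\ge 4$, the cyclic Kautz digraph $CK(d,\ell)$ has diameter $D=2\ell-2$.
   Context: The cyclic Kautz digraph $CK(d,\ell)$ has vertex set $\{x_1\ldots x_\ell\in\mathbb Z_{d+1}^\ell : x_i\neq x_{i+1}\ (1\le i\le \ell-1),\ x_\ell\neq x_1\}$ and arcs $x_1x_2\ldots x_\ell\to x_2\ldots x_\ell y$ for every $y\in\mathbb Z_{d+1}$ with $y\neq x_2,x_\ell$. Distances are directed distances; the diameter is the maximum distance over all ordered pairs of vertices. *)

(* Defs.v *)
From mathcomp Require Import all_boot.
Set Implicit Arguments. Unset Strict Implicit. Unset Printing Implicit Defensive.

Definition word (d l : nat) := l.-tuple 'I_d.+1.

(* Vertex condition of CK(d,l): consecutive letters differ, and last <> first.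
   Indices are 0-based: x_{i+1} is tnth/nth at i. *)
Definition is_ck_vertex (d l : nat) (x : word d l) : bool :=
  [forall i : 'I_l, (i.+1 < l) ==> (nth ord0 x i != nth ord0 x i.+1)]
  && (nth ord0 x l.-1 != nth ord0 x 0).

Definition ck_arc (d l : nat) : rel (word d l) := fun x z =>
  [&& is_ck_vertex x, is_ck_vertex z &
      [exists y : 'I_d.+1,
         [&& val z == rcons (behead x) y,
             y != nth ord0 x 1 & y != nth ord0 x l.-1]]].

Definition walk_len (d l : nat) (u v : word d l) (k : nat) : Prop :=
  exists p : seq (word d l), size p = k /\ path (@ck_arc d l) u p /\ last u p = v.

Definition dist_le (d l : nat) (u v : word d l) (k : nat) : Prop :=
  exists2 j, j <= k & walk_len u v j.

Definition ck_diameter (d l D : nat) : Prop :=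
  (forall u v : word d l, is_ck_vertex u -> is_ck_vertex v -> dist_le u v D) /\
  (exists u v : word d l, [/\ is_ck_vertex u, is_ck_vertex v,
      dist_le u v D & ~ dist_le u v D.-1]).

(* Main.v *)
Require Import Defs.
From mathcomp Require Import all_boot zify.
Set Implicit Arguments. Unset Strict Implicit. Unset Printing Implicit Defensive.

Definition good (d l : nat) (s : seq 'I_d.+1) : Prop :=
  (forall i, i.+1 < size s -> nth ord0 s i != nth ord0 s i.+1) /\
  (forall i, i + l.-1 < size s -> nth ord0 s i != nth ord0 s (i + l.-1)).

Lemma nth_catl d l (x : word d l) r i : i < l -> nth ord0 (val x ++ r) i = nth ord0 x i.
Proof. by move=> hi; rewrite nth_cat size_tuple hi. Qed.

Lemma good_vertex d l (x : word d l) r : 0 < l -> good l (val x ++ r) -> is_ck_vertex x.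
Proof.
move=> l0 [H1 H2]; rewrite /is_ck_vertex; apply/andP; split.
  apply/forallP => -[i hil]; apply/implyP => /= hi.
  have := H1 i; rewrite size_cat size_tuple (nth_catl _ _ (ltnW hi)) (nth_catl _ _ hi).
  by apply; lia.
have := H2 0; rewrite size_cat size_tuple add0n (nth_catl _ _ l0) nth_catl; last by lia.
by rewrite eq_sym; apply; lia.
Qed.

Lemma vertex_good d l (x : word d l) : 0 < l -> is_ck_vertex x -> good l (val x).
Proof.
move=> l0 /andP [/forallP H1 H2]; split; rewrite size_tuple => i hi.
  by have := H1 (Ordinal (ltnW hi)); rewrite hi.
have -> : i = 0 by lia.
by rewrite add0n eq_sym.
Qed.

Lemma tuple_cons d l (x : word d l) : 0 < l -> val x = nth ord0 x 0 :: behead x.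
Proof. by case: x => [[|a t] /= /eqP hs] l0 //; move: hs l0 => <-. Qed.

Lemma good_tail d l a (r : seq 'I_d.+1) : good l (a :: r) -> good l r.
Proof.
move=> [H1 H2]; split => i hi.
  by have := H1 i.+1; apply; rewrite /=; lia.
by have := H2 i.+1; rewrite addSn; apply; rewrite /=; lia.
Qed.

Lemma good_cons d l a (r : seq 'I_d.+1) : 1 < l -> good l r ->
  (0 < size r -> a != nth ord0 r 0) -> (l.-2 < size r -> a != nth ord0 r l.-2) ->
  good l (a :: r).
Proof.
move=> l1 [H1 H2] h0 h1; split => -[|i] /= hi.
- by apply: h0; lia.
- by apply: H1; lia.
- have -> : l.-1 = (l.-2).+1 by lia.
  by apply: h1; lia.
- rewrite addSn in hi *; apply: H2; rewrite /= in hi; lia.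
Qed.

Lemma walk_seq d l (u v : word d l) k : 1 < l -> is_ck_vertex u -> walk_len u v k ->
  exists ys, [/\ size ys = k, good l (val u ++ ys) & drop k (val u ++ ys) = val v].
Proof.
move=> l1 hu [p [<- [hp <-]]].
elim: p u hu hp => [|w p IH] u hu /=.
  by move=> _; exists [::]; rewrite cats0 drop0; split => //; apply: vertex_good => //; lia.
case/andP => /and3P [_ hw /existsP [y /and3P [/eqP hwy hy1 hyl]]] hp.
have [ys [hs hg hd]] := IH w hw hp.
exists (y :: ys); split.
- by rewrite /= hs.
- have hu0 := tuple_cons u (ltnW l1).
  have [Hu1 Hu2] := vertex_good (ltnW l1) hu; rewrite size_tuple in Hu1 Hu2.
  rewrite hu0 /= -cat_rcons -hwy.
  apply: good_cons => //.
  + move=> _; rewrite nth_cat size_tuple (ltnW l1) hwy nth_rcons size_behead size_tuple.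
    have -> : 0 < l.-1 by lia.
    rewrite nth_behead.
    have := Hu1 0 l1; by rewrite eq_sym.
  + move=> _; rewrite nth_cat size_tuple (_ : l.-2 < l); last by lia.
    rewrite hwy nth_rcons size_behead size_tuple (_ : l.-2 < l.-1); last by lia.
    rewrite nth_behead (_ : l.-2.+1 = l.-1); last by lia.
    have := Hu2 0; rewrite add0n; apply; lia.
- have hu0 := tuple_cons u (ltnW l1).
  by rewrite hu0 /= -cat_rcons -hwy.
Qed.

Lemma seq_walk d l ys (u : word d l) : 1 < l -> good l (val u ++ ys) ->
  exists p : seq (word d l),
    [/\ size p = size ys, path (@ck_arc d l) u p & val (last u p) = drop (size ys) (val u ++ ys)].
Proof.
move=> l1; elim: ys u => [|y ys IH] u hg.
  by exists [::]; rewrite cats0 drop0.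
pose w : word d l := insubd u (rcons (behead u) y).
have hw : val w = rcons (behead u) y.
  by rewrite val_insubd size_rcons size_behead size_tuple prednK ?eqxx //; lia.
have hu0 := tuple_cons u (ltnW l1).
have hs : val u ++ y :: ys = nth ord0 u 0 :: (val w ++ ys).
  by rewrite {1}hu0 hw cat_rcons.
have hg' : good l (val w ++ ys) by move: hg; rewrite hs; apply: good_tail.
have [p [hp1 hp2 hp3]] := IH w hg'.
exists (w :: p); split.
- by rewrite /= hp1.
- rewrite /= hp2 andbT /ck_arc.
  apply/and3P; split.
  + exact: good_vertex (ltnW l1) hg.
  + exact: good_vertex (ltnW l1) hg'.
  apply/existsP; exists y; apply/and3P; split.
  + by rewrite hw.
  + have [_ H2] := hg; have := H2 1; rewrite size_cat size_tuple /= add1n prednK; last by lia.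
    rewrite nth_catl // nth_cat size_tuple ltnn subnn /= eq_sym; apply; lia.
  + have [H1 _] := hg; have := H1 l.-1; rewrite size_cat size_tuple /= prednK; last by lia.
    rewrite nth_catl; last by lia.
    rewrite nth_cat size_tuple ltnn subnn /= eq_sym; apply; lia.
- by rewrite /= hp3 hs.
Qed.

Definition wok d l (u v : word d l) m (w : seq 'I_d.+1) j :=
  [&& nth ord0 w j != nth ord0 (nth ord0 u l.-1 :: w) j, nth ord0 w j != nth ord0 u j.+1,
      nth ord0 w j != nth ord0 v (j + (l.-1 - m)) & (j.+1 == m) ==> (nth ord0 w j != nth ord0 v 0)].

Lemma good_glue d l (u v : word d l) m w : 1 < l -> 0 < m -> m < l -> size w = m ->
  is_ck_vertex u -> is_ck_vertex v -> (forall j, j < m -> wok u v m w j) ->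
  (forall i, m < i < l -> nth ord0 u i != nth ord0 v (i - m.+1)) ->
  good l (val u ++ (w ++ val v)).
Proof.
move=> l1 m0 ml sw hu hv hw hx.
have [Hu1 Hu2] := vertex_good (ltnW l1) hu; rewrite size_tuple in Hu1 Hu2.
have [Hv1 Hv2] := vertex_good (ltnW l1) hv; rewrite size_tuple in Hv1 Hv2.
set s := val u ++ (w ++ val v).
have ss : size s = l + (m + l) by rewrite /s !size_cat sw !size_tuple.
have nA : forall i, i < l -> nth ord0 s i = nth ord0 u i.
  by move=> i hi; rewrite /s nth_cat size_tuple hi.
have nB : forall i, l <= i < l + m -> nth ord0 s i = nth ord0 w (i - l).
  by move=> i hi; rewrite /s nth_cat size_tuple ltnNge (_ : l <= i) ?nth_cat ?sw /=; [have -> : i - l < m by lia|lia].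
have nC : forall i, l + m <= i -> nth ord0 s i = nth ord0 v (i - (l + m)).
  move=> i hi; rewrite /s nth_cat size_tuple ltnNge (_ : l <= i) /= ?nth_cat ?sw; last by lia.
  by rewrite ltnNge (_ : m <= i - l) /= ?subnDA //; lia.
split; rewrite ss => i hi.
- case: (ltnP i.+1 l) => h1.
    by rewrite !nA //; [apply: Hu1 | lia].
  case: (ltnP i.+1 (l + m)) => h2.
    case: (ltnP i l) => h3.
      have ei : i = l.-1 by lia.
      rewrite nA // nB; last by lia.
      have -> : i.+1 - l = 0 by lia.
      by have /and4P [hh _ _ _] := hw 0 m0; rewrite /= in hh; rewrite ei eq_sym.
    rewrite !nB; try lia.
    have -> : i.+1 - l = (i - l).+1 by lia.
    have /and4P [hh _ _ _] := hw (i - l).+1 ltac:(lia); by rewrite /= in hh; rewrite eq_sym.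
  case: (ltnP i (l + m)) => h3.
    rewrite nB ?nC; try lia.
    have -> : i.+1 - (l + m) = 0 by lia.
    have /and4P [_ _ _ hh] := hw (i - l) ltac:(lia).
    by rewrite (_ : (i - l).+1 == m) in hh; [exact: hh | apply/eqP; lia].
  rewrite !nC; try lia.
  have -> : i.+1 - (l + m) = (i - (l + m)).+1 by lia.
  by apply: Hv1; lia.
- case: (ltnP i l) => h1.
    case: i h1 hi => [|i] h1 hi.
      rewrite !nA; [exact: (Hu2 0 ltac:(lia)) | lia | lia].
    case: (ltnP (i.+1 + l.-1) (l + m)) => h2.
      rewrite nA // nB; last by lia.
      have -> : i.+1 + l.-1 - l = i by lia.
      by have /and4P [_ hh _ _] := hw i ltac:(lia); rewrite eq_sym.
    rewrite nA // nC; last by lia.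
    have -> : i.+1 + l.-1 - (l + m) = i.+1 - m.+1 by lia.
    by apply: hx; lia.
  case: (ltnP i (l + m)) => h2.
    rewrite nB ?nC; try lia.
    have -> : i + l.-1 - (l + m) = (i - l) + (l.-1 - m) by lia.
    by have /and4P [_ _ hh _] := hw (i - l) ltac:(lia).
  have ei : i = l + m by lia.
  rewrite !nC; try lia.
  have -> : i - (l + m) = 0 by lia.
  have -> : i + l.-1 - (l + m) = 0 + l.-1 by lia.
  by apply: Hv2; lia.
Qed.

Lemma avoid4 d (hd : 4 <= d) (a b c e : 'I_d.+1) :
  exists y : 'I_d.+1, [&& y != a, y != b, y != c & y != e].
Proof.
case: (pickP [pred y : 'I_d.+1 | y \notin [:: a; b; c; e]]) => [y|H].
  by move=> hy; exists y; move: hy; rewrite /= !inE !negb_or.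
have : #|'I_d.+1| <= size [:: a; b; c; e].
  apply: leq_trans (card_size _).
  apply: subset_leq_card; apply/subsetP => y _; have := H y; rewrite /=.
  by case: (y \in _).
rewrite card_ord /=; lia.
Qed.

Lemma greedy d l (u v : word d l) m : 4 <= d -> forall n, n <= m ->
  exists w, size w = n /\ forall j, j < n -> wok u v m w j.
Proof.
move=> hd; elim=> [|n IH] hn; first by exists [::].
have [w [sw hw]] := IH (ltnW hn).
set a := nth ord0 (nth ord0 u l.-1 :: w) n.
have [y /and4P [y1 y2 y3 y4]] := avoid4 hd a (nth ord0 u n.+1) (nth ord0 v (n + (l.-1 - m)))
   (if n.+1 == m then nth ord0 v 0 else a).
exists (rcons w y); split; first by rewrite size_rcons sw.
move=> j hj.
have e2 : nth ord0 (nth ord0 u l.-1 :: rcons w y) j = nth ord0 (nth ord0 u l.-1 :: w) j.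
  by rewrite -rcons_cons nth_rcons /= sw (_ : j < n.+1).
case: (ltnP j n) => hjn.
  have e1 : nth ord0 (rcons w y) j = nth ord0 w j by rewrite nth_rcons sw hjn.
  by rewrite /wok e1 e2; exact: hw.
have ej : j = n by lia.
have e1 : nth ord0 (rcons w y) j = y by rewrite nth_rcons sw ej ltnn eqxx.
rewrite /wok e1 e2 ej -/a y1 y2 y3 /=.
by case: (n.+1 == m) y4.
Qed.

Lemma upper_gen d l (u v : word d l) m : 4 <= d -> 1 < l -> 0 < m -> m < l ->
  is_ck_vertex u -> is_ck_vertex v ->
  (forall i, m < i < l -> nth ord0 u i != nth ord0 v (i - m.+1)) ->
  walk_len u v (m + l).
Proof.
move=> hd l1 m0 ml hu hv hx.
have [w [sw hw]] := greedy u v hd (leqnn m).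
have hg := good_glue l1 m0 ml sw hu hv hw hx.
have [p [sp hp lp]] := seq_walk l1 hg.
have sy : size (w ++ val v) = m + l by rewrite size_cat sw size_tuple.
exists p; split; first by rewrite sp sy.
split => //; apply: val_inj; rewrite lp sy catA drop_size_cat //.
by rewrite size_cat size_tuple sw addnC.
Qed.

Lemma upper d l (u v : word d l) : 4 <= d -> 4 <= l ->
  is_ck_vertex u -> is_ck_vertex v -> dist_le u v (2 * l - 2).
Proof.
move=> hd hl hu hv.
have [Hu1 Hu2] := vertex_good (ltnW (ltnW (ltnW hl))) hu; rewrite size_tuple in Hu1 Hu2.
have [Hv1 Hv2] := vertex_good (ltnW (ltnW (ltnW hl))) hv; rewrite size_tuple in Hv1 Hv2.
case E: (nth ord0 u l.-1 == nth ord0 v 0).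
  exists ((l - 3) + l); first by lia.
  apply: upper_gen => //; try lia.
  move=> i hi.
  have [e1|e2] : i = l.-2 \/ i = l.-1 by lia.
    rewrite e1 (_ : l.-2 - (l - 3).+1 = 0); last by lia.
    rewrite -(eqP E) (_ : l.-1 = (l.-2).+1); last by lia.
    apply: Hu1; lia.
  rewrite e2 (eqP E) (_ : l.-1 - (l - 3).+1 = 1); last by lia.
  by apply: Hv1; lia.
exists ((l - 2) + l); first by lia.
apply: upper_gen => //; try lia.
move=> i hi.
have e2 : i = l.-1 by lia.
by rewrite e2 (_ : l.-1 - (l - 2).+1 = 0) ?E //; lia.
Qed.

Definition gu (l n : nat) : nat := if n == 0 then 2 else if odd (l.-1 - n) then 0 else 1.
Definition gv (n : nat) : nat := if n == 0 then 0 else if odd n then 2 else 1.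

Definition u0 d l : word d l := [tuple inord (gu l (val j)) | j < l].
Definition v0 d l : word d l := [tuple inord (gv (val j)) | j < l].

Lemma gu_le l n : gu l n <= 2. Proof. by rewrite /gu; case: (n == 0); case: odd. Qed.
Lemma gv_le n : gv n <= 2. Proof. by rewrite /gv; case: (n == 0); case: odd. Qed.

Lemma nth_u0 d l i : 2 <= d -> i < l -> val (nth ord0 (u0 d l) i) = gu l i.
Proof.
move=> hd hi; have := @nth_mktuple l _ (fun j : 'I_l => (inord (gu l (val j)) : 'I_d.+1)) ord0 (Ordinal hi).
rewrite /u0 /= => ->; rewrite inordK //; have := gu_le l i; lia.
Qed.

Lemma nth_v0 d l i : 2 <= d -> i < l -> val (nth ord0 (v0 d l) i) = gv i.
Proof.
move=> hd hi; have := @nth_mktuple l _ (fun j : 'I_l => (inord (gv (val j)) : 'I_d.+1)) ord0 (Ordinal hi).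
rewrite /v0 /= => ->; rewrite inordK //; have := gv_le i; lia.
Qed.

Lemma vert_u0 d l : 2 <= d -> 3 <= l -> is_ck_vertex (u0 d l).
Proof.
move=> hd hl; apply/andP; split.
  apply/forallP => -[i hil]; apply/implyP => /= hi.
  apply/eqP => /(congr1 val); rewrite !nth_u0 // /gu /=.
  case: (i =P 0) => [->|h0].
    by case: odd.
  have -> : l.-1 - i = (l.-1 - i.+1).+1 by lia.
  by rewrite /=; case: odd.
apply/eqP => /(congr1 val); rewrite !nth_u0 // ?(_ : l.-1 == 0 = false) /gu /=; try lia.
by rewrite subnn /=; have -> : (l.-1 == 0) = false by lia.
Qed.

Lemma vert_v0 d l : 2 <= d -> 3 <= l -> is_ck_vertex (v0 d l).
Proof.
move=> hd hl; apply/andP; split.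
  apply/forallP => -[i hil]; apply/implyP => /= hi.
  apply/eqP => /(congr1 val); rewrite !nth_v0 // /gv /=.
  by case: (i =P 0) => [->|h0] //=; case: odd.
apply/eqP => /(congr1 val); rewrite !nth_v0 // /gv /=; try lia.
have -> : (l.-1 == 0) = false by lia.
by case: odd.
Qed.

Lemma lower d l : 4 <= d -> 4 <= l -> ~ dist_le (u0 d l) (v0 d l) (2 * l - 3).
Proof.
move=> hd hl [j hj hw].
have d2 : 2 <= d by lia.
have [ys [sy [G1 G2] dr]] := walk_seq (ltnW (ltnW hl)) (vert_u0 d2 (ltnW hl)) hw.
set s := val (u0 d l) ++ ys in G1 G2 dr.
have ss : size s = l + j by rewrite /s size_cat size_tuple sy.
have A : forall i, i < l -> val (nth ord0 s i) = gu l i.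
  by move=> i hi; rewrite /s nth_cat size_tuple hi nth_u0.
have B : forall i, i < l -> val (nth ord0 s (j + i)) = gv i.
  by move=> i hi; rewrite -nth_drop dr nth_v0.
have W : forall a : nat, a + l.-1 < l + j -> val (nth ord0 s a) = val (nth ord0 s (a + l.-1)) -> False.
  move=> a hab e; have := G2 a; rewrite ss => /(_ hab); by rewrite (val_inj e) eqxx.
case: (ltnP j l) => hjl.
  case: (posnP j) => [j0|jp].
    by have := A 0 ltac:(lia); rewrite -(addn0 0) {1}(_ : 0 = j) // B //; lia.
  have e0 := B 0 ltac:(lia); rewrite addn0 A // /gu /gv /= in e0.
  move: e0; rewrite (_ : (j == 0) = false); last by lia.
  case: ifP => // ho _.
  have hj1 : j.+1 < l.
    case: (ltnP j.+1 l) => // h; move: ho; have -> : l.-1 - j = 0 by lia.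
    by [].
  have := B 1 ltac:(lia); rewrite addn1 A // /gu /gv /=.
  by case: ifP.
case: (ltnP j (2 * l - 3)) => hj3.
  set r := j - l + 1.
  have hr : 1 <= r <= l - 3 by lia.
  have e1 : r + l.-1 = j + 0 by lia.
  have e2 : r.+2 + l.-1 = j + 2 by lia.
  case Ho: (odd (l.-1 - r)).
    apply: (W r); first by lia.
    by rewrite e1 A ?B ?/gu ?/gv ?Ho //=; try lia; rewrite (_ : (r == 0) = false) ?Ho //; lia.
  apply: (W r.+2); first by lia.
  rewrite e2 A ?B //; try lia.
  rewrite (_ : l.-1 - r = (l.-1 - r.+2).+2) /= ?negbK in Ho; last by lia.
  by rewrite /gu /gv /= Ho.
have ej : j = 2 * l - 3 by lia.
apply: (W (l - 2)); first by lia.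
rewrite (_ : l - 2 + l.-1 = j + 0); last by lia.
rewrite A ?B //; try lia.
rewrite /gu /gv /= (_ : (l - 2 == 0) = false); last by lia.
by rewrite (_ : l.-1 - (l - 2) = 1) //; lia.
Qed.

Theorem theorem1 (d l : nat) (hd : 4 <= d) (hl : 4 <= l) :
  ck_diameter d l (2 * l - 2).
Proof.
split.
  by move=> u v hu hv; apply: upper.
have d2 : 2 <= d by lia.
exists (u0 d l), (v0 d l); split.
- exact: vert_u0 d2 (ltnW hl).
- exact: vert_v0 d2 (ltnW hl).
- by apply: upper => //; [exact: vert_u0 d2 (ltnW hl) | exact: vert_v0 d2 (ltnW hl)].
- by rewrite (_ : (2 * l - 2).-1 = 2 * l - 3); [exact: lower | lia].
Qed.
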